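(* Let $r>1$ and let $k,\ell,m$ be arbitrary positive integers. Let $n$ be the number of vertices of the $(k,\ell,m)$-megastar, choose $x_0$ uniformly at random from its vertex set, and run the Moran process with fitness $r$ on it with initial mutant $x_0$. Then the process fixates with probability at most $1-1/(52r^2\sqrt{n})$.
   Context: Moran process: given a directed graph $G$ and fitness $r$, one vertex $x_0$ is a mutant, the rest non-mutants. At each step a vertex $v$ is chosen with probability proportional to fitness (mutants $r$, non-mutants $1$), an out-neighbour $w$ of $v$ is chosen uniformly at random and the state of $v$ is copied to $w$. Fixation: eventually every vertex is a mutant. The $(k,\ell,m)$-megastar: disjoint union of reservoirs $R_1,\dots,R_\ell$ (size $m$), cliques $K_1,\dots,K_\ell$ (size $k$), feeders $a_1,\dots,a_\ell$, and centre $v^*$ (so $n=1+\ell(m+k+1)$); edges from $v^*$ to all reservoir vertices, from each vertex of $R_i$ to $a_i$, from $a_i$ to each vertex of $K_i$, both directions between distinct vertices of each $K_i$, and from every clique vertex to $v^*$. *)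

(* Defs.v *)
From HB Require Import structures.
From mathcomp Require Import all_boot all_order all_algebra.
From mathcomp Require Import all_classical all_reals all_analysis.
Set Implicit Arguments. Unset Strict Implicit. Unset Printing Implicit Defensive.
Import Order.TTheory GRing.Theory Num.Theory numFieldNormedType.Exports.
Local Open Scope ring_scope.

Section Moran.
Variables (R : realType) (V : finType) (edge : rel V) (r : R).

Definition outN (v : V) : {set V} := [set w | edge v w].
Definition outdeg (v : V) : nat := #|outN v|.

Definition fit (S : {set V}) (v : V) : R := if v \in S then r else 1.
Definition total_fit (S : {set V}) : R := \sum_(v : V) fit S v.

Definition moran_update (S : {set V}) (v w : V) : {set V} :=
  if v \in S then w |: S else S :\ w.

Definition moran_trans (S : {set V}) (v w : V) : R :=
  (fit S v / total_fit S) * (outdeg v)%:R^-1.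

(* reach_prob t S = probability that the Moran process started in state S
   is in the all-mutant state (setT) at time t.  Since setT is absorbing,
   this equals the probability of having fixated by time t. *)
Fixpoint reach_prob (t : nat) (S : {set V}) : R :=
  match t with
  | 0%N => (S == [set: V])%:R
  | t'.+1 => \sum_(v : V) \sum_(w in outN v)
               moran_trans S v w * reach_prob t' (moran_update S v w)
  end.

(* fixation probability from initial mutant set S: probability that the
   process eventually reaches setT = limit of the (nondecreasing) reach_prob *)
Definition fixation_prob (S : {set V}) : R := limn (fun t : nat => reach_prob t S : R^o).

Definition fixation_prob_uniform : R :=
  (#|V|%:R)^-1 * \sum_(x0 : V) fixation_prob [set x0].
End Moran.

(* None = centre v*;  Some (i, inl (inl j)) = j-th vertex of reservoir R_i;
   Some (i, inl (inr j)) = j-th vertex of clique K_i;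
   Some (i, inr tt) = feeder a_i. *)
Definition megastar_V (k l m : nat) : finType :=
  option ('I_l * (('I_m + 'I_k) + unit))%type.

Definition megastar_edge (k l m : nat) : rel (megastar_V k l m) :=
  fun x y =>
    match x, y with
    | None, Some (_, inl (inl _)) => true                    (* v* -> R_i *)
    | Some (i, inl (inl _)), Some (i', inr _) => i == i'     (* R_i -> a_i *)
    | Some (i, inr _), Some (i', inl (inr _)) => i == i'     (* a_i -> K_i *)
    | Some (i, inl (inr j)), Some (i', inl (inr j')) =>
        (i == i') && (j != j')                               (* within K_i *)
    | Some (_, inl (inr _)), None => true                    (* K_i -> v* *)
    | _, _ => false
    end.

(* Main.v *)
Require Import Defs.
From HB Require Import structures.
From mathcomp Require Import all_boot all_order all_algebra.
From mathcomp Require Import all_classical all_reals all_analysis.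
From mathcomp Require Import ring lra zify.
Import Order.TTheory GRing.Theory Num.Theory numFieldNormedType.Exports.
Local Open Scope ring_scope.


Section Gen.
Variables (R : realType) (V : finType) (edge : rel V) (r : R).
Hypothesis r_gt0 : 0 < r.
Hypothesis deg_pos : forall v, (0 < outdeg edge v)%N.
Variable v0 : V.

Lemma fit_gt0 (S : {set V}) v : 0 < fit r S v.
Proof. by rewrite /fit; case: ifP. Qed.

Lemma total_fit_gt0 (S : {set V}) : 0 < total_fit r S.
Proof.
rewrite /total_fit (bigD1 v0) //= ltr_pwDl ?fit_gt0 //.
by apply: sumr_ge0 => v _; apply: ltW; apply: fit_gt0.
Qed.

Lemma trans_ge0 (S : {set V}) v w : 0 <= moran_trans edge r S v w.
Proof.
rewrite /moran_trans; apply: mulr_ge0; last by rewrite invr_ge0.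
by apply: divr_ge0; [apply: ltW; apply: fit_gt0 | apply: ltW; apply: total_fit_gt0].
Qed.

Lemma sum_out_inv v : \sum_(w in outN edge v) (outdeg edge v)%:R^-1 = 1 :> R.
Proof.
rewrite sumr_const. rewrite -/(outdeg edge v). rewrite -[_ *+ _]mulr_natr mulVf //.
by rewrite pnatr_eq0 -lt0n deg_pos.
Qed.

Lemma sum_trans (S : {set V}) :
  \sum_v \sum_(w in outN edge v) moran_trans edge r S v w = 1.
Proof.
rewrite /moran_trans.
under eq_bigr => v _ do rewrite -mulr_sumr sum_out_inv mulr1.
rewrite -mulr_suml -/(total_fit r S) mulfV //.
by apply: lt0r_neq0; apply: total_fit_gt0.
Qed.

Lemma reach_ge0 t (S : {set V}) : 0 <= reach_prob edge r t S.
Proof.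
elim: t S => [|t IH] S /=; first by case: (S == _).
apply: sumr_ge0 => v _; apply: sumr_ge0 => w _.
by apply: mulr_ge0; [apply: trans_ge0 | apply: IH].
Qed.

Lemma reach_mono t (S : {set V}) : reach_prob edge r t S <= reach_prob edge r t.+1 S.
Proof.
elim: t S => [|t IH] S.
  rewrite [X in _ <= X]/=.
  have [->|/negbTE hS] := eqVneq S [set: V]; last first.
    rewrite /= hS; apply: sumr_ge0 => v _; apply: sumr_ge0 => w _.
    by apply: mulr_ge0; [apply: trans_ge0 | case: (_ == _)].
  rewrite /= eqxx -[X in X <= _](sum_trans [set: V]); apply: ler_sum => v _; apply: ler_sum => w _.
  have -> : moran_update [set: V] v w = [set: V].
    by rewrite /moran_update finset.in_setT; apply/setP => x; rewrite !inE orbT.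
  by rewrite eqxx mulr1.
rewrite [X in X <= _]/= [X in _ <= X]/=.
apply: ler_sum => v _; apply: ler_sum => w _.
by apply: ler_wpM2l; [apply: trans_ge0 | apply: IH].
Qed.

Variable f : {set V} -> R.
Hypothesis f_ge0 : forall S, 0 <= f S.
Hypothesis f_T : 1 <= f [set: V].
Hypothesis f_sup : forall S,
  \sum_v \sum_(w in outN edge v) moran_trans edge r S v w * f (moran_update S v w) <= f S.

Lemma reach_le_f t (S : {set V}) : reach_prob edge r t S <= f S.
Proof.
elim: t S => [|t IH] S /=.
  by have [->|/negbTE hS] := eqVneq S [set: V]; rewrite /= ?hS.
apply: le_trans (f_sup S); apply: ler_sum => v _; apply: ler_sum => w _.
by apply: ler_wpM2l; [apply: trans_ge0 | apply: IH].
Qed.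

Lemma fix_le_f (S : {set V}) : fixation_prob edge r S <= f S.
Proof.
have mono : nondecreasing_seq (fun t => reach_prob edge r t S : R^o).
  by apply/nondecreasing_seqP => t; apply: reach_mono.
have ub : has_ubound (range (fun t => reach_prob edge r t S : R^o)).
  by exists (f S) => _ [t _ <-]; apply: reach_le_f.
have H := nondecreasing_cvgn mono ub.
rewrite /fixation_prob (cvg_lim _ H) //.
apply: (cvgr_to_le H); apply: nearW => t; apply: reach_le_f.
Qed.
End Gen.

Set Implicit Arguments.

Section Pot.
Variables (R : realType) (V : finType) (edge : rel V) (r : R).
Hypothesis r_gt0 : 0 < r.
Hypothesis deg_pos : forall v, (0 < outdeg edge v)%N.
Variable v0 : V.
Variable q : V -> R.
Hypothesis q_gt0 : forall v, 0 < q v.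
Hypothesis q_le1 : forall v, q v <= 1.

Definition gp (S : {set V}) : R := \prod_(v in S) q v.

Definition Ef (S : {set V}) (v w : V) : R :=
  if v \in S then (if w \in S then 0 else r * (q w - 1))
  else (if w \in S then (q w)^-1 - 1 else 0).

Definition Fcut (S : {set V}) : R :=
  \sum_v (outdeg edge v)%:R^-1 * \sum_(w in outN edge v) Ef S v w.

Hypothesis Fcut_ge0 : forall S, 0 <= Fcut S.

Lemma gp_ge0 S : 0 <= gp S.
Proof. by apply: prodr_ge0 => v _; apply: ltW. Qed.

Lemma gp_le1 S : gp S <= 1.
Proof. by apply: prodr_ile1 => v _; rewrite ltW ?q_le1. Qed.

Lemma gp_upd S v w :
  fit r S v * gp (moran_update S v w) = gp S * (fit r S v + Ef S v w).
Proof.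
rewrite /moran_update /fit /Ef /gp.
have qn0 : q w != 0 by apply: lt0r_neq0.
case vS: (v \in S); case wS: (w \in S).
- rewrite (finset.setUidPr _); last by rewrite finset.sub1set.
  by rewrite addr0 mulrC.
- rewrite finset.big_setU1 ?wS //=; ring.
- rewrite [in RHS](bigD1 w) //=.
  have -> : \prod_(i in S | i != w) q i = \prod_(i in S :\ w) q i.
    by apply: eq_bigl => i; rewrite !inE andbC.
  by rewrite mul1r addrC subrK mulrC mulrA mulVf // mul1r.
- have -> : S :\ w = S by apply/setP => x; rewrite !inE; case: eqP => // ->; rewrite wS.
  by rewrite addr0 mulrC.
Qed.

Definition fpot (S : {set V}) : R := 1 - gp S + gp [set: V].

Lemma fpot_sup S :
  \sum_v \sum_(w in outN edge v) moran_trans edge r S v w * fpot (moran_update S v w) <= fpot S.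
Proof.
have W0 := @total_fit_gt0 R V r r_gt0 v0 S.
have key : forall v w, moran_trans edge r S v w * gp (moran_update S v w) =
   gp S / total_fit r S * ((outdeg edge v)%:R^-1 * (fit r S v + Ef S v w)).
  move=> v w; rewrite /moran_trans.
  transitivity ((total_fit r S)^-1 * (outdeg edge v)%:R^-1 * (fit r S v * gp (moran_update S v w))).
    by ring.
  by rewrite gp_upd; ring.
have e1 : \sum_v \sum_(w in outN edge v) moran_trans edge r S v w * fpot (moran_update S v w)
   = (1 + gp [set: V]) * (\sum_v \sum_(w in outN edge v) moran_trans edge r S v w)
     - \sum_v \sum_(w in outN edge v) moran_trans edge r S v w * gp (moran_update S v w).
  rewrite mulr_sumr -sumrB; apply: eq_bigr => v _.
  rewrite mulr_sumr -sumrB; apply: eq_bigr => w _.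
  by rewrite /fpot; ring.
have e2 : \sum_v \sum_(w in outN edge v) moran_trans edge r S v w * gp (moran_update S v w)
   = gp S / total_fit r S * (total_fit r S + Fcut S).
  under eq_bigr => v _ do under eq_bigr => w _ do rewrite key.
  rewrite /Fcut /total_fit -big_split /= mulr_sumr; apply: eq_bigr => v _.
  rewrite -mulr_sumr; congr (_ * _).
  rewrite -mulr_sumr big_split /= mulrDr; congr (_ + _).
  have dn0 : (outdeg edge v)%:R != 0 :> R by rewrite pnatr_eq0 -lt0n deg_pos.
  by rewrite sumr_const -/(outdeg edge v) -[fit r S v *+ _]mulr_natr mulrCA mulVf // mulr1.
rewrite e1 e2 (@sum_trans R V edge r r_gt0 deg_pos v0) mulr1 /fpot.
have : gp S <= gp S / total_fit r S * (total_fit r S + Fcut S).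
  rewrite mulrDr mulfVK ?lt0r_neq0 // lerDl; apply: mulr_ge0 => //.
  by apply: divr_ge0; [apply: gp_ge0 | apply: ltW].
lra.
Qed.

Lemma fix_single_le x :
  fixation_prob edge r [set x] <= 1 - q x + gp [set: V].
Proof.
have := @fix_le_f R V edge r r_gt0 deg_pos v0 fpot _ _ fpot_sup [set x].
rewrite /fpot /gp big_set1; apply.
- move=> S; have := gp_le1 S; have := gp_ge0 [set: V]; rewrite /gp; lra.
- lra.
Qed.
End Pot.

Lemma sum_option (R : realType) (T : finType) (F : option T -> R) :
  \sum_(x : option T) F x = F None + \sum_(x : T) F (Some x).
Proof.
rewrite (bigD1 None) //=; congr (_ + _).
rewrite (reindex_omap Some id) /=; last by case.
by apply: eq_bigl => x; rewrite eqxx.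
Qed.

Lemma sum_unit (R : realType) (F : unit -> R) : \sum_(x : unit) F x = F tt.
Proof. by rewrite (big_pred1 tt) // => -[]. Qed.

Lemma sum_pred1 (R : realType) (I : finType) (i : I) (X : I -> R) :
  \sum_(i' : I) (if i == i' then X i' else 0) = X i.
Proof.
rewrite -big_mkcond /= (big_pred1 i) // => i'; by rewrite eq_sym.
Qed.

Section Mega.
Variables (R : realType) (k l m : nat).
Local Notation T := (megastar_V k l m).

Lemma sumT (F : T -> R) :
  \sum_(v : T) F v = F None + \sum_(i < l) (\sum_(j < m) F (Some (i, inl (inl j)))
      + \sum_(j < k) F (Some (i, inl (inr j))) + F (Some (i, inr tt))).
Proof.
rewrite sum_option; congr (_ + _).
transitivity (\sum_(p : 'I_l * (('I_m + 'I_k) + unit)) (fun i x => F (Some (i, x))) p.1 p.2).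
  by apply: eq_bigr => -[].
rewrite -(pair_bigA _ (fun i x => F (Some (i, x)))) /=.
apply: eq_bigr => i _.
by rewrite big_sumType big_sumType sum_unit.
Qed.

Lemma sum_outN (G : T -> R) v :
  \sum_(w in outN (@megastar_edge k l m) v) G w
  = \sum_w (if megastar_edge v w then G w else 0).
Proof. by rewrite big_mkcond; apply: eq_bigr => w _; rewrite inE. Qed.

Lemma deg_sum v : (outdeg (@megastar_edge k l m) v)%:R
  = \sum_(w : T) (if megastar_edge v w then 1 else 0) :> R.
Proof.
rewrite /outdeg -sum1_card natr_sum -sum_outN; apply: eq_bigr => w _; by [].
Qed.

Lemma deg_c : (outdeg (@megastar_edge k l m) None)%:R = (l * m)%:R :> R.
Proof.
rewrite deg_sum sumT /= add0r.
under eq_bigr => i _ do rewrite big1_eq sumr_const card_ord !addr0.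
by rewrite sumr_const card_ord -[_ *+ l]mulr_natr -natrM mulnC.
Qed.

Lemma deg_R i j : (outdeg (@megastar_edge k l m) (Some (i, inl (inl j))))%:R = 1 :> R.
Proof.
rewrite deg_sum sumT /= add0r.
under eq_bigr => i' _ do rewrite !big1_eq !add0r.
by rewrite sum_pred1.
Qed.

Lemma deg_A i : (outdeg (@megastar_edge k l m) (Some (i, inr tt)))%:R = k%:R :> R.
Proof.
rewrite deg_sum sumT /= add0r.
under eq_bigr => i' _ do rewrite big1_eq add0r addr0.
rewrite exchange_big /=.
under eq_bigr => j _ do rewrite (@sum_pred1 R _ i (fun _ => 1)).
by rewrite sumr_const card_ord.
Qed.

Lemma sum_neq (I : finType) (j : I) : \sum_(j0 : I) (if j != j0 then 1 else 0) = #|I|%:R - 1 :> R.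
Proof.
transitivity (\sum_(j0 : I) (1 - (if j == j0 then 1 else 0)) : R).
  by apply: eq_bigr => j0 _; case: (j == j0); rewrite ?subrr ?subr0.
by rewrite sumrB sumr_const (@sum_pred1 R _ j (fun _ => 1)).
Qed.

Lemma deg_K i j : (outdeg (@megastar_edge k l m) (Some (i, inl (inr j))))%:R = k%:R :> R.
Proof.
rewrite deg_sum sumT /=.
under eq_bigr => i' _ do rewrite big1_eq add0r addr0.
transitivity (1 + \sum_(i0 < l) \sum_(j0 < k) (if i == i0 then (if j != j0 then 1 else 0) else 0) : R).
  by congr (_ + _); apply: eq_bigr => i0 _; apply: eq_bigr => j0 _; case: (i == i0).
rewrite exchange_big /=.
under eq_bigr => j0 _ do rewrite (@sum_pred1 R _ i (fun _ => if j != j0 then 1 else 0)).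
by rewrite sum_neq card_ord addrC subrK.
Qed.

Variable r : R.
Definition qv (v : T) : R :=
  match v with
  | None => (1 + r ^+ 2)^-1
  | Some (_, inl (inl _)) => (1 + r ^+ 2 * l%:R)^-1
  | Some (_, inl (inr _)) => (1 + r ^+ 2)^-1
  | Some (_, inr _) => (1 + r / m%:R)^-1
  end.

Local Notation E := (Ef R r qv).
Local Notation d v := ((outdeg (@megastar_edge k l m) v)%:R^-1 : R).
Local Notation N v := (outN (@megastar_edge k l m) v).

Lemma termC S : d None * \sum_(w in N None) E S None w
  = (l * m)%:R^-1 * \sum_(i < l) \sum_(j < m) E S None (Some (i, inl (inl j))).
Proof.
rewrite deg_c sum_outN sumT /= add0r; congr (_ * _); apply: eq_bigr => i _.
by rewrite big1_eq !addr0.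
Qed.

Lemma termR S i j : d (Some (i, inl (inl j))) * \sum_(w in N (Some (i, inl (inl j)))) E S (Some (i, inl (inl j))) w
  = E S (Some (i, inl (inl j))) (Some (i, inr tt)).
Proof.
rewrite deg_R invr1 mul1r sum_outN sumT /= add0r.
under eq_bigr => i' _ do rewrite !big1_eq !add0r.
by rewrite (@sum_pred1 R _ i (fun i' => E S (Some (i, inl (inl j))) (Some (i', inr tt)))).
Qed.

Lemma termA S i : d (Some (i, inr tt)) * \sum_(w in N (Some (i, inr tt))) E S (Some (i, inr tt)) w
  = k%:R^-1 * \sum_(j < k) E S (Some (i, inr tt)) (Some (i, inl (inr j))).
Proof.
rewrite deg_A sum_outN sumT /= add0r; congr (_ * _).
under eq_bigr => i' _ do rewrite big1_eq add0r addr0.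
transitivity (\sum_(i' < l) \sum_(j0 < k) (if i == i' then E S (Some (i, inr tt)) (Some (i', inl (inr j0))) else 0)).
  by apply: eq_bigr => i' _; apply: eq_bigr => j0 _; case: eqP.
rewrite exchange_big /=; apply: eq_bigr => j0 _.
by rewrite (@sum_pred1 R _ i (fun i' => E S (Some (i, inr tt)) (Some (i', inl (inr j0))))).
Qed.

Lemma termK S i j : d (Some (i, inl (inr j))) * \sum_(w in N (Some (i, inl (inr j)))) E S (Some (i, inl (inr j))) w
  = k%:R^-1 * (E S (Some (i, inl (inr j))) None
     + \sum_(j' < k) (if j != j' then E S (Some (i, inl (inr j))) (Some (i, inl (inr j'))) else 0)).
Proof.
rewrite deg_K sum_outN sumT /=; congr (_ * (_ + _)).
under eq_bigr => i' _ do rewrite big1_eq add0r addr0.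
transitivity (\sum_(i' < l) \sum_(j0 < k) (if i == i' then
   (if j != j0 then E S (Some (i, inl (inr j))) (Some (i', inl (inr j0))) else 0) else 0)).
  by apply: eq_bigr => i' _; apply: eq_bigr => j0 _; case: eqP.
rewrite exchange_big /=; apply: eq_bigr => j0 _.
by rewrite (@sum_pred1 R _ i (fun i' => if j != j0 then E S (Some (i, inl (inr j))) (Some (i', inl (inr j0))) else 0)).
Qed.

Hypothesis r_gt1 : 1 < r.
Hypothesis k_gt0 : (0 < k)%N.
Hypothesis l_gt0 : (0 < l)%N.
Hypothesis m_gt0 : (0 < m)%N.

Lemma inv1p (a : R) : 0 <= a -> ((1 + a)^-1)^-1 - 1 = a.
Proof. by move=> a0; rewrite invrK; ring. Qed.

Lemma rq_ge (a : R) : 0 <= a -> - r <= r * ((1 + a)^-1 - 1) /\ - (r * a) <= r * ((1 + a)^-1 - 1)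
   /\ r * ((1 + a)^-1 - 1) <= 0.
Proof.
move=> a0; have r0 : 0 < r by apply: lt_trans r_gt1.
have h1 : 0 < 1 + a by lra.
have e : (1 + a)^-1 - 1 = - (a / (1 + a)).
  by field; apply: lt0r_neq0.
have : 0 <= a / (1 + a) <= a.
  apply/andP; split; first by apply: divr_ge0 => //; apply: ltW.
  by rewrite ler_pdivrMr // ler_peMr //; lra.
have : a / (1 + a) <= 1 by rewrite ler_pdivrMr // mul1r; lra.
rewrite e => h2 /andP [h3 h4]; split; [|split].
- by rewrite mulrN lerN2 ler_piMr // ltW.
- by rewrite mulrN lerN2 ler_wpM2l // ltW.
- by rewrite mulrN oppr_le0 mulr_ge0 // ltW.
Qed.

Definition Lf (xa xc : bool) : R :=
  if xa then (if xc then 0 else r) else (if xc then - r ^+ 2 else 0).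

Lemma term_R_ge (S : {set T}) i j :
  Lf (Some (i, inr tt) \in S) (None \in S) * m%:R^-1 <=
  (l * m)%:R^-1 * E S None (Some (i, inl (inl j))) + E S (Some (i, inl (inl j))) (Some (i, inr tt)).
Proof.
have r0 : 0 < r by apply: lt_trans r_gt1.
have m0 : 0 < m%:R :> R by rewrite ltr0n.
have l0 : 1 <= l%:R :> R by rewrite ler1n.
set u := m%:R^-1. have u0 : 0 < u by rewrite invr_gt0.
have ruu : r * u <= r ^+ 2 * u.
  rewrite -subr_ge0 -mulrBl; apply: mulr_ge0; last exact: ltW.
  have -> : r ^+ 2 - r = r * (r - 1) by ring.
  by apply: mulr_ge0; rewrite ?subr_ge0 ltW.
have elm : (l * m)%:R^-1 = l%:R^-1 * u :> R by rewrite natrM invfM.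
have F1 : (l * m)%:R^-1 * (((1 + r ^+ 2 * l%:R)^-1)^-1 - 1) = r ^+ 2 * u.
  rewrite inv1p; last by apply: mulr_ge0; [apply: exprn_ge0; apply: ltW | lra].
  rewrite elm; field; lra.
have [G1 [G2 G3]] := rq_ge _ (mulr_ge0 (exprn_ge0 2 (ltW r0)) (ltW (lt_le_trans ltr01 l0))).
have li0 : 0 < l%:R^-1 :> R by rewrite invr_gt0; lra.
have li1 : l%:R^-1 <= 1 :> R by rewrite invf_le1; lra.
have F2 : - (r * u) <= (l * m)%:R^-1 * (r * ((1 + r ^+ 2 * l%:R)^-1 - 1)).
  have h0 : 0 <= l%:R^-1 * u by apply: mulr_ge0; apply: ltW.
  have h1 := ler_wpM2l h0 G1.
  have h2 : l%:R^-1 * (u * r) <= u * r by apply: ler_piMl => //; apply: mulr_ge0; apply: ltW.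
  rewrite elm; apply: le_trans h1.
  have -> : l%:R^-1 * u * - r = - (l%:R^-1 * (u * r)) by ring.
  by rewrite lerN2 [r * u]mulrC.
have F2' : (l * m)%:R^-1 * (r * ((1 + r ^+ 2 * l%:R)^-1 - 1)) <= 0.
  by rewrite mulr_ge0_le0 // invr_ge0 ler0n.
have F3 : ((1 + r / m%:R)^-1)^-1 - 1 = r * u by rewrite inv1p // divr_ge0 // ltW.
have [G4 [G5 G6]] := rq_ge _ (divr_ge0 (ltW r0) (ltW m0)).
rewrite -/u in G4 G5 G6.
have G5' : - (r ^+ 2 * u) <= r * ((1 + r * u)^-1 - 1) by rewrite expr2 -mulrA.
rewrite /Ef /= /Lf -/u.
case: (None \in S); case: (Some (i, inl (inl j)) \in S); case: (Some (i, inr tt) \in S);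
  rewrite ?mulr0 ?addr0 ?add0r ?mul0r; try lra.
Qed.

Lemma qC_facts : ((1 + r ^+ 2)^-1)^-1 - 1 = r ^+ 2 /\ - r <= r * ((1 + r ^+ 2)^-1 - 1)
   /\ r <= r ^+ 2.
Proof.
have r0 : 0 < r by apply: lt_trans r_gt1.
have h : 0 <= r ^+ 2 by apply: exprn_ge0; apply: ltW.
split; first exact: inv1p.
split; first by have [] := rq_ge _ h.
by rewrite expr2 ler_peMl // ltW.
Qed.

Lemma term_K_ge (S : {set T}) i j :
  - Lf (Some (i, inr tt) \in S) (None \in S) <=
  E S (Some (i, inr tt)) (Some (i, inl (inr j))) + E S (Some (i, inl (inr j))) None.
Proof.
have [H1 [H2 H3]] := qC_facts.
rewrite /Ef /= /Lf.
by case: (None \in S); case: (Some (i, inl (inr j)) \in S); case: (Some (i, inr tt) \in S);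
  rewrite ?mulr0 ?addr0 ?add0r ?mul0r; lra.
Qed.

Lemma term_KK_ge (S : {set T}) i j j' :
  0 <= E S (Some (i, inl (inr j))) (Some (i, inl (inr j'))) + E S (Some (i, inl (inr j'))) (Some (i, inl (inr j))).
Proof.
have [H1 [H2 H3]] := qC_facts.
rewrite /Ef /=.
by case: (Some (i, inl (inr j)) \in S); case: (Some (i, inl (inr j')) \in S);
  rewrite ?mulr0 ?addr0 ?add0r ?mul0r; lra.
Qed.

Lemma Fcut_ge0 (S : {set T}) : 0 <= Fcut R (@megastar_edge k l m) r qv S.
Proof.
rewrite /Fcut sumT termC.
under [X in _ + X]eq_bigr => i _.
  under eq_bigr => j _ do rewrite termR.
  under [\sum_(j < k) _]eq_bigr => j _ do rewrite termK.
  rewrite termA.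
  over.
rewrite mulr_sumr -big_split /=; apply: sumr_ge0 => i _.
set Lv := Lf (Some (i, inr tt) \in S) (None \in S).
have m0 : 0 < m%:R :> R by rewrite ltr0n.
have k0 : 0 < k%:R :> R by rewrite ltr0n.
have hA : Lv <= (l * m)%:R^-1 * \sum_(j < m) E S None (Some (i, inl (inl j)))
                + \sum_(j < m) E S (Some (i, inl (inl j))) (Some (i, inr tt)).
  rewrite mulr_sumr -big_split /=.
  apply: le_trans (ler_sum _ (fun j _ => term_R_ge S i j)).
  by rewrite sumr_const card_ord -[_ *+ m]mulr_natr -mulrA mulVf ?mulr1 // lt0r_neq0.
have hB : k%:R * (- Lv) <= \sum_(j < k) (E S (Some (i, inr tt)) (Some (i, inl (inr j)))
                + E S (Some (i, inl (inr j))) None).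
  apply: le_trans (ler_sum _ (fun j _ => term_K_ge S i j)).
  by rewrite sumr_const card_ord mulr_natl.
set X := \sum_(j < k) \sum_(j' < k) (if j != j' then E S (Some (i, inl (inr j))) (Some (i, inl (inr j'))) else 0).
have hC : 0 <= X.
  have eX : X = \sum_(j < k) \sum_(j' < k) (if j != j' then E S (Some (i, inl (inr j'))) (Some (i, inl (inr j))) else 0).
    by rewrite /X exchange_big /=; apply: eq_bigr => j _; apply: eq_bigr => j' _; rewrite eq_sym.
  have : 0 <= X + X.
    rewrite {2}eX -big_split /=; apply: sumr_ge0 => j _; rewrite -big_split /=; apply: sumr_ge0 => j' _.
    by case: (j != j'); rewrite ?addr0 // term_KK_ge.
  lra.
have eK : \sum_(j < k) k%:R^-1 * (E S (Some (i, inl (inr j))) None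
     + \sum_(j' < k) (if j != j' then E S (Some (i, inl (inr j))) (Some (i, inl (inr j'))) else 0))
   = k%:R^-1 * (\sum_(j < k) E S (Some (i, inl (inr j))) None + X).
  by rewrite -mulr_sumr big_split.
rewrite eK.
have hB' : - Lv <= k%:R^-1 * \sum_(j < k) (E S (Some (i, inr tt)) (Some (i, inl (inr j)))
                + E S (Some (i, inl (inr j))) None).
  by rewrite ler_pdivlMl // .
rewrite big_split /= in hB'.
have hX : 0 <= k%:R^-1 * X by apply: mulr_ge0 => //; rewrite invr_ge0 ltW.
lra.
Qed.
End Mega.

Lemma prod_option (R : realType) (T : finType) (F : option T -> R) :
  \prod_(x : option T) F x = F None * \prod_(x : T) F (Some x).
Proof.
rewrite (bigD1 None) //=; congr (_ * _).
rewrite (reindex_omap Some id) /=; last by case.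
by apply: eq_bigl => x; rewrite eqxx.
Qed.

Lemma prod_unit (R : realType) (F : unit -> R) : \prod_(x : unit) F x = F tt.
Proof. by rewrite (big_pred1 tt) // => -[]. Qed.

Section Fin.
Variables (R : realType) (k l m : nat) (r : R).
Hypothesis r_gt1 : 1 < r.
Hypothesis k_gt0 : (0 < k)%N.
Hypothesis l_gt0 : (0 < l)%N.
Hypothesis m_gt0 : (0 < m)%N.
Local Notation T := (megastar_V k l m).

Lemma prodT (F : T -> R) :
  \prod_(v : T) F v = F None * \prod_(i < l) (\prod_(j < m) F (Some (i, inl (inl j)))
      * \prod_(j < k) F (Some (i, inl (inr j))) * F (Some (i, inr tt))).
Proof.
rewrite prod_option; congr (_ * _).
transitivity (\prod_(p : 'I_l * (('I_m + 'I_k) + unit)) (fun i x => F (Some (i, x))) p.1 p.2).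
  by apply: eq_bigr => -[].
rewrite -(pair_bigA _ (fun i x => F (Some (i, x)))) /=.
apply: eq_bigr => i _.
by rewrite big_sumType big_sumType prod_unit.
Qed.

Lemma deg_pos (v : T) : (0 < outdeg (@megastar_edge k l m) v)%N.
Proof.
rewrite -(ltr0n R).
case: v => [[i [[j|j]|[]]]|].
- by rewrite deg_R.
- by rewrite deg_K ltr0n.
- by rewrite deg_A ltr0n.
- by rewrite deg_c ltr0n muln_gt0 l_gt0 m_gt0.
Qed.

Lemma r0 : 0 < r. Proof. by apply: lt_trans r_gt1. Qed.

Lemma qv_facts (v : T) : 0 < qv R r v /\ qv R r v <= 1.
Proof.
have r0 : 0 < r by apply: lt_trans r_gt1.
have h : forall a : R, 0 <= a -> 0 < (1 + a)^-1 /\ (1 + a)^-1 <= 1.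
  move=> a a0; split; first by rewrite invr_gt0; lra.
  by rewrite invf_le1; lra.
have m0 : 0 < m%:R :> R by rewrite ltr0n.
case: v => [[i [[j|j]|[]]]|] /=; apply: h.
- by apply: mulr_ge0; [apply: exprn_ge0; apply: ltW | apply: ler0n].
- by apply: exprn_ge0; apply: ltW.
- by apply: divr_ge0; apply: ltW.
- by apply: exprn_ge0; apply: ltW.
Qed.


Local Notation p := ((1 + r ^+ 2)^-1 : R).

Lemma sum_qv_ge : p * (1 + m + l * k + l)%:R <= \sum_(v : T) qv R r v.
Proof.
have r0 : 0 < r by apply: lt_trans r_gt1.
have r2 : 0 <= r ^+ 2 by apply: exprn_ge0; apply: ltW.
have l1 : 1 <= l%:R :> R by rewrite ler1n.
have m1 : 1 <= m%:R :> R by rewrite ler1n.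
have k0 : 0 <= k%:R :> R by apply: ler0n.
set qR := (1 + r ^+ 2 * l%:R)^-1.
set qA := (1 + r / m%:R)^-1.
have hR : p <= l%:R * qR.
  have a0 : 0 < 1 + r ^+ 2 * l%:R by have := mulr_ge0 r2 (ler0n R l); lra.
  have b0 : 0 < 1 + r ^+ 2 by lra.
  rewrite -subr_ge0.
  have -> : l%:R * qR - p = (l%:R - 1) / ((1 + r ^+ 2 * l%:R) * (1 + r ^+ 2)).
    by rewrite /qR; field; apply/andP; split; apply: lt0r_neq0.
  by apply: divr_ge0; [lra | apply: mulr_ge0; apply: ltW].
have hA : p <= qA.
  rewrite /qA lef_pV2 ?posrE; [| lra | ].
    rewrite lerD2l; apply: (@le_trans _ _ r).
      apply: ler_piMr; first exact: ltW.
      by rewrite invf_le1; lra.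
    by rewrite expr2 ler_peMl // ltW.
  have h0 : 0 <= r / m%:R by apply: divr_ge0; [apply: ltW | apply: ler0n].
  lra.
have eS : \sum_(v : T) qv R r v = p + l%:R * (m%:R * qR + k%:R * p + qA).
  rewrite sumT /=; congr (_ + _).
  by rewrite !sumr_const !card_ord !mulr_natl.
rewrite eS !natrD natrM.
have h1 : m%:R * p <= m%:R * (l%:R * qR) by apply: ler_wpM2l => //; lra.
have h2 : l%:R * p <= l%:R * qA by apply: ler_wpM2l => //; lra.
have -> : p * (1 + m%:R + l%:R * k%:R + l%:R) = p + m%:R * p + l%:R * (k%:R * p) + l%:R * p by ring.
have -> : p + l%:R * (m%:R * qR + k%:R * p + qA) = p + m%:R * (l%:R * qR) + l%:R * (k%:R * p) + l%:R * qA by ring.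
lra.
Qed.

Lemma gp_le : gp R (qv R r) [set: T] <= p ^+ (1 + l * (m + k)).
Proof.
have r0 : 0 < r by apply: lt_trans r_gt1.
have r2 : 0 <= r ^+ 2 by apply: exprn_ge0; apply: ltW.
have p0 : 0 <= p by rewrite invr_ge0; lra.
have hq := qv_facts.
rewrite /gp (eq_bigl xpredT); last by move=> v; rewrite finset.in_setT.
rewrite prodT /=.
rewrite exprD expr1 ler_wpM2l //.
rewrite mulnC exprM.
have -> : p ^+ (m + k) ^+ l = \prod_(i < l) p ^+ (m + k) by rewrite prodr_const card_ord.
apply: ler_prod => i _.
have [c0 c1] := hq (Some (i, inr tt)); rewrite /= in c0 c1.
have [hR0 hR1] : 0 <= (1 + r ^+ 2 * l%:R)^-1 /\ (1 + r ^+ 2 * l%:R)^-1 <= p.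
  split; first by rewrite invr_ge0; have := mulr_ge0 r2 (ler0n R l); lra.
  rewrite lef_pV2 ?posrE; [| have := mulr_ge0 r2 (ler0n R l); lra | lra].
  rewrite lerD2l ler_peMr // ler1n //.
have ha : 0 <= \prod_(j < m) (1 + r ^+ 2 * l%:R)^-1 <= p ^+ m.
  rewrite prodr_const card_ord; apply/andP; split; first exact: exprn_ge0.
  by apply: lerXn2r.
have hb : \prod_(j < k) (1 + r ^+ 2)^-1 = p ^+ k by rewrite prodr_const card_ord.
rewrite hb exprD; case/andP: ha => ha0 ha1.
apply/andP; split.
  by apply: mulr_ge0; [apply: mulr_ge0 => //; apply: exprn_ge0 | apply: ltW].
rewrite -[X in _ <= X]mulr1; apply: ler_pM => //.
- by apply: mulr_ge0 => //; apply: exprn_ge0.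
- exact: ltW.
- by apply: ler_pM => //; apply: exprn_ge0.
Qed.
End Fin.

Lemma final_arith (R : realType) (r p PV Q : R) (n X J : nat) :
  1 < r -> p = (1 + r ^+ 2)^-1 -> (0 < n)%N -> (n <= X ^ 2)%N -> (2 * n <= 4 ^ J)%N ->
  p * X%:R <= Q -> PV <= p ^+ (1 + J) ->
  n%:R^-1 * (n%:R + n%:R * PV - Q) <= 1 - (52 * r ^+ 2 * Num.sqrt n%:R)^-1.
Proof.
move=> r1 ep n0 nX nJ hQ hPV.
have r0 : 0 < r by lra.
have r2 : 1 <= r ^+ 2 by rewrite expr2; nra.
have nR0 : 0 < n%:R :> R by rewrite ltr0n.
set s := Num.sqrt n%:R.
have s0 : 0 < s by rewrite sqrtr_gt0.
have ss : s ^+ 2 = n%:R by rewrite sqr_sqrtr // ltW.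
have sX : s <= X%:R.
  have -> : X%:R = Num.sqrt (X%:R ^+ 2) :> R by rewrite sqrtr_sqr ger0_norm.
  by rewrite ler_sqrt ?ltr0n // -natrX ler_nat.
set iv := s^-1.
have iv0 : 0 < iv by rewrite invr_gt0.
have sis : s * iv = 1 by rewrite mulfV // lt0r_neq0.
have p0 : 0 < p by rewrite ep invr_gt0; lra.
have p2 : p * 2 <= 1 by rewrite ep -ler_pdivlMl ?mulr1 ?invrK; lra.
set P := p ^+ J.
have P0 : 0 <= P by apply: exprn_ge0; apply: ltW.
have z1 : P * 2 ^+ J <= 1 by rewrite -exprMn exprn_ile1 // mulr_ge0 // ltW.
have z0 : 0 <= P * 2 ^+ J by apply: mulr_ge0 => //; apply: exprn_ge0.
have n4 : 2 * n%:R <= (2 ^+ J) ^+ 2 :> R.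
  rewrite -exprM mulnC exprM.
  have -> : (2 : R) ^+ 2 = 4%:R by rewrite expr2 -natrM.
  by rewrite -natrX -(natrM R 2) ler_nat.
have y2 : (P * s) ^+ 2 * 2 <= 1.
  rewrite exprMn ss.
  have : (P * 2 ^+ J) ^+ 2 <= 1 by rewrite expr2; nra.
  rewrite exprMn => h.
  have : P ^+ 2 * (2 * n%:R) <= P ^+ 2 * (2 ^+ J) ^+ 2 by apply: ler_wpM2l => //; apply: exprn_ge0.
  lra.
have y0 : 0 <= P * s by apply: mulr_ge0 => //; apply: ltW.
have y1 : P * s <= 25 / 26 by rewrite expr2 in y2; nra.
have hP : P <= 25 / 26 * iv.
  have -> : P = (P * s) * iv by rewrite -mulrA sis mulr1.
  by apply: ler_wpM2r => //; apply: ltW.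
have h52 : (52 * r ^+ 2 * s)^-1 <= p / 26 * iv.
  rewrite invfM /iv; apply: ler_wpM2r; first exact: ltW.
  have h1 : (52 * r ^+ 2)^-1 <= (26 * (1 + r ^+ 2))^-1.
    rewrite lef_pV2 ?posrE; lra.
  apply: le_trans h1 _; rewrite ep le_eqVlt; apply/orP; left; apply/eqP.
  by field; lra.
have hQn : p * iv <= n%:R^-1 * Q.
  have ni0 : 0 <= n%:R^-1 :> R by rewrite invr_ge0 ltW.
  have h1 : n%:R^-1 * (p * X%:R) <= n%:R^-1 * Q by apply: ler_wpM2l.
  have h2 : n%:R^-1 * (p * s) <= n%:R^-1 * (p * X%:R).
    by apply: ler_wpM2l => //; apply: ler_wpM2l => //; apply: ltW.
  have e : n%:R^-1 * (p * s) = p * iv.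
    by rewrite -ss /iv; field; apply: lt0r_neq0.
  lra.
have hPV' : PV <= p * P by rewrite -exprS.
have e : n%:R^-1 * (n%:R + n%:R * PV - Q) = 1 + PV - n%:R^-1 * Q.
  by field; apply: lt0r_neq0.
rewrite e.
have : p * P <= p * (25 / 26 * iv) by apply: ler_wpM2l => //; apply: ltW.
lra.
Qed.

Lemma pow4_ge (J : nat) : (2 <= J)%N -> (2 + 4 * J <= 4 ^ J)%N.
Proof.
elim: J => [//|J IH] hJ.
have [->|hJ2] := eqVneq J 1%N; first by [].
have hJ' : (2 <= J)%N by move: hJ hJ2; case: J {IH} => [|[|J]].
have := IH hJ'; rewrite expnS; lia.
Qed.

Theorem theorem7p3 (R : realType) (r : R) (k l m : nat) :
  1 < r -> (0 < k)%N -> (0 < l)%N -> (0 < m)%N ->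
  let n := #|megastar_V k l m| in
  fixation_prob_uniform (@megastar_edge k l m) r
    <= 1 - (52 * r ^+ 2 * Num.sqrt (n%:R))^-1.
Proof.
move=> r1 k0 l0 m0; rewrite /=; set n := #|megastar_V k l m|.
have r0 : 0 < r by lra.
have hn : n = (1 + l * (m + k + 1))%N.
  by rewrite /n card_option card_prod !card_sum !card_ord card_unit add1n.
have hfix := @fix_single_le R _ (@megastar_edge k l m) r r0 (deg_pos R k0 l0 m0) None (qv R r)
  (fun v => proj1 (qv_facts R r r1 m0 v)) (fun v => proj2 (qv_facts R r r1 m0 v))
  (@Fcut_ge0 R k l m r r1 k0 l0 m0).
rewrite /fixation_prob_uniform -/n.
set PV := gp R (qv R r) [set: megastar_V k l m].
set Q := \sum_(v : megastar_V k l m) qv R r v.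
have hs : \sum_(x0 : megastar_V k l m) fixation_prob (@megastar_edge k l m) r [set x0]
    <= n%:R + n%:R * PV - Q.
  apply: le_trans (ler_sum _ (fun x _ => hfix x)) _.
  rewrite big_split /= sumrB !sumr_const -/n.
  have -> : PV *+ n = n%:R * PV by rewrite mulr_natl.
  rewrite -/Q; lra.
have ni0 : 0 <= n%:R^-1 :> R by rewrite invr_ge0 ler0n.
apply: le_trans (ler_wpM2l ni0 hs) _.
apply: (@final_arith R r _ PV Q n (1 + m + l * k + l)%N (l * (m + k))%N r1 erefl).
- by rewrite hn.
- rewrite hn; nia.
- rewrite hn.
  have hJ : (2 <= l * (m + k))%N by nia.
  have := pow4_ge _ hJ; nia.
- exact: (sum_qv_ge R k l m r r1 l0 m0).
- exact: (gp_le R k l m r r1 l0 m0).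
Qed.
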